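(* Let $n\ge 1$, let $I=\{1,\dots,n\}=I_\Sigma\cup I_{\max}$ be a partition into disjoint (possibly empty) index sets, and let $\gamma_{ij}\in\mathcal{K}_\infty\cup\{0\}$, $i,j\in I$, with $\gamma_{ii}\equiv 0$. Let $\Gamma:\mathbb{R}^n_+\to\mathbb{R}^n_+$, $D_\alpha$ and $\mu$ be as defined in the context. Assume that there exists $\alpha\in\mathcal{K}_\infty$ such that $\Gamma\circ D_\alpha(s)\not\geq s$ for all $s\in\mathbb{R}^n_+\setminus\{0\}$. Then there exists $\phi\in\mathcal{K}_\infty$ such that for all $w,v\in\mathbb{R}^n_+$ the inequality $w\le \mu(\Gamma(w),v)$ implies $\|w\|\le\phi(\|v\|)$.
   Context: $\mathbb{R}_+=[0,\infty)$, $\mathbb{R}^n_+=[0,\infty)^n$. For $x,y\in\mathbb{R}^n$: $x\ge y$ iff $x_i\ge y_i$ for all $i$; $x>y$ iff $x_i>y_i$ for all $i$; $x\not\ge y$ iff there is $i$ with $x_i<y_i$. $\|\cdot\|$ denotes a norm on $\mathbb{R}^n$. $\mathcal{K}$ is the class of continuous strictly increasing $\gamma:\mathbb{R}_+\to\mathbb{R}_+$ with $\gamma(0)=0$; $\mathcal{K}_\infty$ those in $\mathcal{K}$ that are unbounded; $\mathrm{id}$ is the identity. The operator $\Gamma(s)=(\Gamma_1(s),\dots,\Gamma_n(s))^T$ is defined by $\Gamma_i(s)=\gamma_{i1}(s_1)+\dots+\gamma_{in}(s_n)$ for $i\in I_\Sigma$ and $\Gamma_i(s)=\max\{\gamma_{i1}(s_1),\dots,\gamma_{in}(s_n)\}$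 for $i\in I_{\max}$. For $\alpha\in\mathcal{K}_\infty$, $D_\alpha(s)=(D_1(s_1),\dots,D_n(s_n))^T$ with $D_i=\mathrm{id}+\alpha$ for $i\in I_\Sigma$ and $D_i=\mathrm{id}$ for $i\in I_{\max}$. The map $\mu:\mathbb{R}^n_+\times\mathbb{R}^n_+\to\mathbb{R}^n_+$ is $\mu(w,v)=(\mu_1(w_1,v_1),\dots,\mu_n(w_n,v_n))^T$ with $\mu_i(a,b)=a+b$ for $i\in I_\Sigma$ and $\mu_i(a,b)=\max\{a,b\}$ for $i\in I_{\max}$. *)

(* Defs.v *)
From HB Require Import structures.
From mathcomp Require Import all_boot all_order all_algebra.
From mathcomp Require Import all_classical all_reals all_analysis.
Set Implicit Arguments. Unset Strict Implicit. Unset Printing Implicit Defensive.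
Import Order.TTheory GRing.Theory Num.Theory numFieldNormedType.Exports.
Local Open Scope ring_scope.
Local Open Scope classical_set_scope.

Section Defs.
Variable R : realType.

Definition classK (g : R -> R) : Prop :=
  g 0 = 0 /\
  {within [set x : R | 0 <= x], continuous g} /\
  (forall x y : R, 0 <= x -> x < y -> g x < g y).

Definition classKinf (g : R -> R) : Prop :=
  classK g /\ (forall M : R, exists x : R, 0 <= x /\ M <= g x).

Definition zero_on_Rplus (g : R -> R) : Prop := forall x : R, 0 <= x -> g x = 0.

Variable n : nat.

Definition vnonneg (s : 'I_n -> R) : Prop := forall i, 0 <= s i.
Definition vzero : 'I_n -> R := fun _ => 0.

Definition is_norm (N : ('I_n -> R) -> R) : Prop :=
  (forall x, N x = 0 -> x = vzero) /\
  (forall (a : R) x, N (fun i => a * x i) = `|a| * N x) /\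
  (forall x y, N (fun i => x i + y i) <= N x + N y).

(* Isum : the index set I_Sigma; its complement is I_max *)
Definition Gam (Isum : pred 'I_n) (gam : 'I_n -> 'I_n -> R -> R)
    (s : 'I_n -> R) : 'I_n -> R :=
  fun i => if i \in Isum then \sum_(j < n) gam i j (s j)
           else \big[Num.max/0]_(j < n) gam i j (s j).

Definition Dal (Isum : pred 'I_n) (alpha : R -> R) (s : 'I_n -> R) : 'I_n -> R :=
  fun i => if i \in Isum then s i + alpha (s i) else s i.

Definition muv (Isum : pred 'I_n) (w v : 'I_n -> R) : 'I_n -> R :=
  fun i => if i \in Isum then w i + v i else Num.max (w i) (v i).

End Defs.

(* Main.v *)
Require Import Defs.
From mathcomp Require Import all_boot all_order all_algebra.
From mathcomp Require Import all_classical all_reals all_analysis.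
From mathcomp Require Import ring lra.
Import Order.TTheory GRing.Theory Num.Theory numFieldNormedType.Exports.
Local Open Scope ring_scope.
Local Open Scope classical_set_scope.

Set Implicit Arguments. Unset Strict Implicit.
Section S.
Variable R : realType.

Definition ctsP (f : R -> R) := forall x : R, 0 <= x -> forall e : R, 0 < e ->
  exists2 d : R, 0 < d & forall y : R, 0 <= y -> `|x - y| < d -> `|f x - f y| < e.

Lemma ctsPE (f : R -> R) :
  {within [set x : R | 0 <= x], continuous f} <-> ctsP f.
Proof.
rewrite subspace_continuousP; split.
- move=> H x x0 e e0.
  have /cvgrPdist_lt/(_ e e0) := H x x0.
  rewrite /within /= => /nbhs_ballP [d d0 Hd].
  exists d => // y y0 xy; by apply: Hd.

- move=> H x x0; apply/cvgrPdist_lt => e e0.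
  have [d d0 Hd] := H x x0 e e0.
  rewrite /within /=; apply/nbhs_ballP; exists d => //= y.
  move=> xy y0; exact: Hd.
Qed.

Lemma ctsP_cst (c : R) : ctsP (fun _ => c).
Proof. by move=> x _ e e0; exists 1 => // y _ _; rewrite subrr normr0. Qed.

Lemma ctsP_id : ctsP id.
Proof. by move=> x _ e e0; exists e. Qed.

Lemma ctsP_add f g : ctsP f -> ctsP g -> ctsP (fun x => f x + g x).
Proof.
move=> cf cg x x0 e e0.
have e20 : 0 < e / 2 by rewrite divr_gt0.
have [d1 d10 H1] := cf x x0 _ e20.
have [d2 d20 H2] := cg x x0 _ e20.
exists (Num.min d1 d2); first by rewrite lt_min d10 d20.
move=> y y0; rewrite lt_min => /andP[a b].
have -> : f x + g x - (f y + g y) = (f x - f y) + (g x - g y) by ring.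
apply: le_lt_trans (ler_normD _ _) _.
rewrite [e](splitr e); apply: ltrD; [exact: H1|exact: H2].
Qed.

Lemma ctsP_scale (k : R) f : ctsP f -> ctsP (fun x => k * f x).
Proof.
move=> cf x x0 e e0.
have e20 : 0 < e / (`|k| + 1) by rewrite divr_gt0 // ltr_wpDl.
have [d d0 H] := cf x x0 _ e20.
exists d => // y y0 xy.
rewrite -mulrBr normrM.
have := H y y0 xy => h.
apply: (@le_lt_trans _ _ ((`|k| + 1) * `|f x - f y|)).
  by rewrite ler_wpM2r // lerDl.
have k1 : 0 < `|k| + 1 by rewrite ltr_wpDl.
have -> : e = (`|k| + 1) * (e / (`|k| + 1)).
  by rewrite mulrC divfK // gt_eqF.
by rewrite ltr_pM2l.
Qed.

Lemma ctsP_comp g f : ctsP g -> ctsP f -> (forall x, 0 <= x -> 0 <= f x) ->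
  ctsP (fun x => g (f x)).
Proof.
move=> cg cf fp x x0 e e0.
have [d1 d10 H1] := cg (f x) (fp x x0) e e0.
have [d2 d20 H2] := cf x x0 d1 d10.
exists d2 => // y y0 xy; apply: H1; [exact: fp| exact: H2].
Qed.

Lemma ctsP_sum (I : Type) (r : seq I) (F : I -> R -> R) :
  (forall i, ctsP (F i)) -> ctsP (fun x => \sum_(i <- r) F i x).
Proof.
move=> cF; elim: r => [|a r IH].
  by under eq_fun do rewrite big_nil; exact: ctsP_cst.
under eq_fun do rewrite big_cons; exact: ctsP_add.
Qed.


Lemma surj_cts f : f 0 = 0 -> ctsP f -> forall y M, 0 <= y -> 0 <= M -> y <= f M ->
  exists x, [/\ 0 <= x, x <= M & f x = y].
Proof.
move=> f0 cf y M y0 M0 yM.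
have cw : {within `[0, M], continuous f}.
  apply: (@continuous_subspaceW _ _ _ [set x : R | 0 <= x]); last exact/ctsPE.
  by move=> x /=; rewrite in_itv /= => /andP[].
have hv : Num.min (f 0) (f M) <= y <= Num.max (f 0) (f M).
  by rewrite f0 ge_min le_max yM orbT andbT y0.
have [x] := IVT M0 cw hv.
by rewrite in_itv /= => /andP[x0 xM] fx; exists x.
Qed.

Definition smono (f : R -> R) := forall x y, 0 <= x -> x < y -> f x < f y.

Lemma smono_lt f : smono f -> forall a b, 0 <= a -> 0 <= b -> (f a < f b) = (a < b).
Proof.
move=> fm a b a0 b0; case: (ltgtP a b) => ab.
- by rewrite fm.
- by apply/negbTE; rewrite -leNgt; apply/ltW/fm.
- by rewrite ab ltxx.
Qed.

Lemma smono_le f : smono f -> forall a b, 0 <= a -> 0 <= b -> (f a <= f b) = (a <= b).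
Proof.
by move=> fm a b a0 b0; rewrite !leNgt smono_lt.
Qed.

Lemma Kinf_inv (f : R -> R) : classKinf f -> exists g, [/\ classKinf g,
  (forall x, 0 <= x -> g (f x) = x) &
  (forall y, 0 <= y -> 0 <= g y /\ f (g y) = y)].
Proof.
move=> H; case: H => - [f0 [fc fm]] fu.
have cf : ctsP f by apply/ctsPE.
have fnn x : 0 <= x -> 0 <= f x.
  by move=> x0; rewrite -f0 (smono_le fm) // lexx.
have ex y : exists x, (y < 0 -> x = y) /\ (0 <= y -> 0 <= x /\ f x = y).
  case: (ltP y 0) => y0.
    by exists y; split => // /(lt_le_trans y0); rewrite ltxx.
  have [M [M0 fM]] := fu y.
  have [x [x0 _ fx]] := surj_cts f0 cf y0 M0 fM.
  by exists x; split => // /(lt_le_trans y0); rewrite ltxx.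
pose g y := proj1_sig (cid (ex y)).
have gP y : 0 <= y -> 0 <= g y /\ f (g y) = y.
  by move=> y0; rewrite /g; case: cid => x /= [_]; apply.
have gf x : 0 <= x -> g (f x) = x.
  move=> x0; have [g0 fg] := gP _ (fnn x x0).
  case: (ltgtP (g (f x)) x) => // h.
    by have := fm _ _ g0 h; rewrite fg ltxx.
  by have := fm _ _ x0 h; rewrite fg ltxx.
have gm : smono g.
  move=> x y x0 xy; have y0 : 0 <= y by apply/ltW/(le_lt_trans x0 xy).
  have [gx fgx] := gP _ x0; have [gy fgy] := gP _ y0.
  by rewrite -(smono_lt fm) // fgx fgy.
exists g; split => //; split; [split; [| split] |].
- by rewrite -{1}f0 gf // lexx.
- apply/ctsPE => y0 y00 e e0.
  set x0 := g y0.
  have [gx0 fgx0] := gP _ y00.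
  have d1P : 0 < f (x0 + e) - y0.
    by rewrite subr_gt0 -{1}fgx0 fm // ltrDl.
  have upper y : 0 <= y -> y0 <= y -> `|y0 - y| < f (x0 + e) - y0 -> `|g y0 - g y| < e.
    move=> y0' yy hy.
    have gyx : x0 <= g y by rewrite /x0 (smono_le gm).
    have xe0 : 0 <= x0 + e by rewrite addr_ge0 // ltW.
    have hy' : y < f (x0 + e).
      by move: hy; rewrite distrC ger0_norm ?subr_ge0 // ltrBlDr subrK.
    have : g y < g (f (x0 + e)) by rewrite (smono_lt gm) // fnn.
    rewrite gf // => h.
    by rewrite distrC ger0_norm ?subr_ge0 // ltrBlDl.
  case: (ltP (x0 - e) 0) => xe.
  + exists (f (x0 + e) - y0) => // y y0' hy.
    case: (leP y0 y) => yy; first exact: upper.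
    have gyx : g y <= x0 by rewrite /x0 (smono_le gm) // ltW.
    have [gy0 _] := gP _ y0'.
    rewrite ger0_norm ?subr_ge0 //.
    by rewrite ltrBlDl -ltrBlDr (lt_le_trans xe).
  + have d2P : 0 < y0 - f (x0 - e).
      by rewrite subr_gt0 -{1}fgx0 fm // gtrBl.
    exists (Num.min (f (x0 + e) - y0) (y0 - f (x0 - e))); first by rewrite lt_min d1P.
    move=> y y0' /[dup] hy; rewrite lt_min => /andP[h1 h2].
    case: (leP y0 y) => yy; first exact: upper.
    have gyx : g y <= x0 by rewrite /x0 (smono_le gm) // ltW.
    have hy' : f (x0 - e) < y.
      by move: h2; rewrite ger0_norm ?subr_ge0 ?ltW // ltrD2l ltrN2.
    have : g (f (x0 - e)) < g y by rewrite (smono_lt gm) // fnn.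
    rewrite gf // => h.
    by rewrite ger0_norm ?subr_ge0 // ltrBlDl -ltrBlDr.
- exact: gm.
- move=> M; exists (f (Num.max M 0)); split; first by apply: fnn; rewrite le_max lexx orbT.
  by rewrite gf ?le_max ?lexx ?orbT.
Qed.

Section Norm.
Variable n : nat.
Variable N : ('I_n -> R) -> R.
Hypothesis hN : is_norm N.

Lemma N0 : N (fun _ => 0) = 0.
Proof.
case: hN => _ [hom _].
by have := hom 0 (fun _ => 0); rewrite normr0 !mul0r.
Qed.

Lemma Nge0 x : 0 <= N x.
Proof.
case: hN => _ [hom tri].
have := tri x (fun i => -1 * x i).
have -> : (fun i => x i + -1 * x i) = (fun _ => 0).
  by apply: funext => i; rewrite mulN1r subrr.
rewrite N0 hom normrN normr1 mul1r.
by move=> h; lra.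
Qed.

Lemma Nsub a b : `|N a - N b| <= N (fun i => a i - b i).
Proof.
case: hN => _ [hom tri].
have h1 : N a <= N b + N (fun i => a i - b i).
  by have := tri b (fun i => a i - b i); under eq_fun do rewrite addrC subrK.
have h2 : N b <= N a + N (fun i => a i - b i).
  have := tri a (fun i => -1 * (a i - b i)).
  under eq_fun do rewrite mulN1r opprB addrC subrK.
  by rewrite hom normrN normr1 mul1r.
rewrite ler_norml; apply/andP; split; lra.
Qed.

Lemma Nsum (I : Type) (r : seq I) (F : I -> 'I_n -> R) :
  N (fun i => \sum_(j <- r) F j i) <= \sum_(j <- r) N (F j).
Proof.
case: hN => _ [hom tri].
elim: r => [|a r IH].
  by under eq_fun do rewrite big_nil; rewrite N0 big_nil.
under eq_fun do rewrite big_cons; rewrite big_cons.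
apply: le_trans (tri _ _) _.
by rewrite lerD2l.
Qed.

Definition ev (j : 'I_n) : 'I_n -> R := fun i => (i == j)%:R.

Lemma Nupper x : N x <= \sum_j `|x j| * N (ev j).
Proof.
case: hN => _ [hom tri].
have ex : x = (fun i => \sum_j x j * ev j i).
  apply: funext => i; rewrite (bigD1 i) //= /ev eqxx mulr1 big1 ?addr0 //.
  by move=> j /negbTE; rewrite eq_sym => ->; rewrite mulr0.
rewrite {1}ex; apply: le_trans (Nsum _ _) _.
apply: ler_sum => j _.
by rewrite (hom (x j) (ev j)).
Qed.


Definition Fr (r : 'rV[R]_n) : R := N (fun i => r ord0 i).

Lemma Fr_cont : continuous Fr.
Proof.
move=> r0; apply/(@cvgrPdist_lt _ _ _ (nbhs r0) (nbhs_filter r0)) => e e0.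
set K := \sum_j N (ev j).
have K0 : 0 <= K by apply: sumr_ge0 => j _; exact: Nge0.
have ep0 : 0 < e / (K + 1) by rewrite divr_gt0 // ltr_wpDl.
have H : \forall r \near r0, forall j, `|r0 ord0 j - (r : 'rV[R]_n) ord0 j| < e / (K + 1).
  apply: (@filter_forall _ _ (fun j (r : 'rV[R]_n) => `|r0 ord0 j - r ord0 j| < e / (K + 1)) _ (nbhs_filter r0)) => j.
  by have /cvgrPdist_lt /(_ _ ep0) := @coord_continuous R 1 n ord0 j r0.
apply: filterS H => r Hr.
apply: le_lt_trans (Nsub _ _) _.
apply: le_lt_trans (Nupper _) _.
apply: (@le_lt_trans _ _ (\sum_j e / (K + 1) * N (ev j))).
  apply: ler_sum => j _; apply: ler_wpM2r; first exact: Nge0.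
  exact: ltW.
rewrite -mulr_sumr -/K.
have k1 : 0 < K + 1 by rewrite ltr_wpDl.
rewrite mulrAC ltr_pdivrMr // ltr_pM2l //.
by rewrite ltrDl.
Qed.

Definition Ak (k : 'I_n) : set 'rV[R]_n :=
  [set v : 'rV[R]_n | forall i,
    (if i == k then [set 1] else `[-1, 1]%classic) (v ord0 i)].

Lemma Ak_min k : exists m, 0 < m /\ forall t, t \in Ak k -> m <= Fr t.
Proof.
have cA : compact (Ak k).
  apply: (@rV_compact R n (fun i => if i == k then [set 1] else `[-1, 1]%classic)) => i; case: (i == k).
    exact: compact_set1.
  exact: segment_compact.
have nA : Ak k !=set0.
  exists (\row_j (if j == k then 1 else 0)) => i; rewrite mxE.
  case: (i == k) => //=; rewrite in_itv /=; apply/andP; split; lra.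
have [c cA' cmin] := EVT_min_rV nA cA (continuous_subspaceT Fr_cont).
exists (Fr c); split => //.
rewrite lt_def Nge0 andbT; apply/eqP => /hN.1 c0.
move: cA'; rewrite inE => /(_ k); rewrite eqxx /= => ck.
have : (fun i => c ord0 i) k = @vzero R n k by rewrite -c0.
by rewrite /vzero /= ck => /eqP; rewrite oner_eq0.
Qed.

Lemma Nlower : exists C, 0 <= C /\ forall x i, `|x i| <= C * N x.
Proof.
have [m Hm] := choice Ak_min.
exists (\sum_k (m k)^-1); split.
  by apply: sumr_ge0 => k _; rewrite invr_ge0 ltW // (Hm k).1.
move=> x i.
have [k0 _ Hk] := @arg_maxP _ _ 'I_n i predT (fun k => `|x k|) isT.
have xik : `|x i| <= `|x k0| by exact: Hk.
have [xk0|xk0] := eqVneq (x k0) 0.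
  apply: le_trans xik _; rewrite xk0 normr0.
  apply: mulr_ge0; last exact: Nge0.
  by apply: sumr_ge0 => k' _; rewrite invr_ge0 ltW // (Hm k').1.
pose r := \row_j ((x k0)^-1 * x j).
have rA : r \in Ak k0.
  rewrite inE => j; rewrite mxE.
  case: eqP => [->|_]; first by rewrite mulVf.
  rewrite /= in_itv /= -ler_norml normrM normfV ler_pdivrMl ?normr_gt0 // mulr1.
  exact: Hk.
have := (Hm k0).2 r rA.
rewrite /Fr /r.
under eq_fun do rewrite mxE.
case: hN => _ [hom _]; rewrite hom normfV => h.
have m0 := (Hm k0).1.
apply: le_trans xik _.
apply: (@le_trans _ _ ((m k0)^-1 * N x)).
  have a0 : 0 < `|x k0| by rewrite normr_gt0.
  move: h; rewrite mulrC ler_pdivlMr // => h.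
  by rewrite mulrC ler_pdivlMr // mulrC.
apply: ler_wpM2r; first exact: Nge0.
by rewrite (bigD1 k0) //= lerDl sumr_ge0 // => k' _; rewrite invr_ge0 ltW // (Hm k').1.
Qed.

End Norm.
Section Core.
Variable n : nat.
Variable Isum : pred 'I_n.
Variable gam : 'I_n -> 'I_n -> R -> R.
Hypothesis hg : forall i j, classKinf (gam i j) \/ zero_on_Rplus (gam i j).
Variables alpha beta d : R -> R.
Hypothesis ha : classKinf alpha.
Hypothesis hb : classKinf beta.
Hypothesis hba : forall x, 0 <= x -> beta (alpha x) = x.
Hypothesis hd : forall y, 0 <= y -> 0 <= d y /\ d y + alpha (d y) = y.
Hypothesis hcond : forall s : 'I_n -> R, vnonneg s -> s <> @vzero R n ->
  exists i, Gam Isum gam (Dal Isum alpha s) i < s i.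

Lemma g0 i j : gam i j 0 = 0.
Proof. by case: (hg i j) => [[[h _] _]|h]; [exact: h| apply: h; rewrite lexx]. Qed.

Lemma gmono i j x y : 0 <= x -> x <= y -> gam i j x <= gam i j y.
Proof.
move=> x0 xy; case: (hg i j) => [[[_ [_ m]] _]|h].
  by move: xy; rewrite le_eqVlt => /orP[/eqP->//|xy]; exact/ltW/m.
by rewrite !h //; exact: le_trans xy.
Qed.

Lemma gnn i j x : 0 <= x -> 0 <= gam i j x.
Proof. by move=> x0; rewrite -(g0 i j) gmono. Qed.

Lemma gcts i j : ctsP (gam i j).
Proof.
case: (hg i j) => [[[_ [c _]] _]|h]; first exact/ctsPE.
by move=> x x0 e e0; exists 1 => // y y0 _; rewrite !h ?subrr ?normr0.
Qed.

Definition G c := \sum_i \sum_j gam i j c.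

Lemma Gnn c : 0 <= c -> 0 <= G c.
Proof. by move=> c0; apply: sumr_ge0 => i _; apply: sumr_ge0 => j _; exact: gnn. Qed.

Lemma Gsum_ge i c : 0 <= c -> \sum_j gam i j c <= G c.
Proof.
move=> c0; rewrite /G [X in _ <= X](bigD1 i) //= lerDl.
by apply: sumr_ge0 => i' _; apply: sumr_ge0 => j _; exact: gnn.
Qed.

Lemma G_ge i j c : 0 <= c -> gam i j c <= G c.
Proof.
move=> c0; apply: le_trans (Gsum_ge i c0).
by rewrite (bigD1 j) //= lerDl; apply: sumr_ge0 => j' _; exact: gnn.
Qed.

Lemma Gmono x y : 0 <= x -> x <= y -> G x <= G y.
Proof. by move=> x0 xy; apply: ler_sum => i _; apply: ler_sum => j _; exact: gmono. Qed.

Lemma G0 : G 0 = 0.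
Proof. by rewrite /G big1 // => i _; rewrite big1 // => j _; exact: g0. Qed.

Lemma Gcts : ctsP G.
Proof. by apply: ctsP_sum => i; apply: ctsP_sum => j; exact: gcts. Qed.

Definition K c := G c + c.
Definition H c := c + (beta (K c) + K c).

Lemma bnn x : 0 <= x -> 0 <= beta x.
Proof.
case: hb => [[b0 [_ bm]] _] x0; rewrite -b0.
by move: x0; rewrite le_eqVlt => /orP[/eqP<-//|x0]; exact/ltW/bm.
Qed.

Lemma Knn c : 0 <= c -> 0 <= K c.
Proof. by move=> c0; rewrite addr_ge0 // Gnn. Qed.

Lemma H_ge c : 0 <= c -> c <= H c.
Proof. by move=> c0; rewrite /H lerDl addr_ge0 // ?bnn // Knn. Qed.

Lemma iter_ge k c : 0 <= c -> c <= iter k H c.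
Proof.
move=> c0; elim: k => [|k IH]; first exact: lexx.
by rewrite iterS; apply: le_trans IH (H_ge (le_trans c0 IH)).
Qed.

Lemma Gam_nn w : vnonneg w -> forall i, 0 <= Gam Isum gam w i.
Proof.
move=> w0 i; rewrite /Gam; case: ifP => _.
  by apply: sumr_ge0 => j _; exact: gnn.
exact: bigmax_ge_id.
Qed.

Section Split.
Variables (w : 'I_n -> R) (c : R) (S : {set 'I_n}).
Hypothesis w0 : vnonneg w.
Hypothesis c0 : 0 <= c.
Hypothesis wc : forall j, j \notin S -> w j <= c.
Let wS := fun j => if j \in S then w j else 0.

Lemma Gam_split_sum i : i \in Isum -> Gam Isum gam w i <= Gam Isum gam wS i + G c.
Proof.
move=> iI; rewrite /Gam iI.
apply: (@le_trans _ _ (\sum_j (gam i j (wS j) + gam i j c))).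
  apply: ler_sum => j _; rewrite /wS; case: ifP => jS.
    by rewrite lerDl gnn.
  by rewrite g0 add0r gmono // wc // jS.
by rewrite big_split /= lerD2l Gsum_ge.
Qed.

Lemma Gam_split_max i : i \notin Isum ->
  Gam Isum gam w i <= Num.max (Gam Isum gam wS i) (G c).
Proof.
move=> iI; rewrite /Gam (negbTE iI).
apply: bigmax_le; first by rewrite le_max Gnn // orbT.
move=> j _; rewrite le_max; case: (boolP (j \in S)) => jS.
  apply/orP; left.
  have -> : gam i j (w j) = (fun j => gam i j (wS j)) j by rewrite /wS jS.
  exact: le_bigmax.
apply/orP; right; apply: le_trans (G_ge i j c0).
by apply: gmono => //; exact: wc.
Qed.
End Split.

Lemma a0 : alpha 0 = 0.
Proof. by case: ha => [[]]. Qed.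

Lemma ann x : 0 <= x -> 0 <= alpha x.
Proof.
case: ha => [[b0 [_ bm]] _] x0; rewrite -b0.
by move: x0; rewrite le_eqVlt => /orP[/eqP<-//|x0]; exact/ltW/bm.
Qed.

Lemma core k : forall (S : {set 'I_n}), (#|S| <= k)%N -> forall c w, 0 <= c ->
  vnonneg w -> (forall j, j \notin S -> w j <= c) ->
  (forall j, j \in S -> w j <= muv Isum (Gam Isum gam w) (fun _ => c) j) ->
  forall j, w j <= iter k H c.
Proof.
elim: k => [|k IH] S hS c w c0 w0 wc wm j.
  have S0 : S = finset.set0 by apply: cards0_eq; move: hS; rewrite leqn0 => /eqP.
  by apply: wc; rewrite S0 finset.in_set0.
pose s j := if j \in S then (if j \in Isum then d (w j) else w j) else 0.
have s0 : vnonneg s.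
  move=> i; rewrite /s; case: ifP => // _; case: ifP => // _.
  exact: (hd (w0 i)).1.
pose wS := fun j => if j \in S then w j else 0.
have DsE : Dal Isum alpha s = wS.
  apply: funext => i; rewrite /Dal /s /wS.
  case: (boolP (i \in S)) => iS; case: (boolP (i \in Isum)) => iI //=.
  - exact: (hd (w0 i)).2.
  - by rewrite a0 addr0.
have Hc0 : 0 <= H c by apply: le_trans (H_ge c0).
have [sz|snz] := pselect (s = @vzero R n).
  case: (boolP (j \in S)) => jS.
    have : Dal Isum alpha s j = wS j by rewrite DsE.
    rewrite sz /Dal /vzero /wS jS a0 addr0; case: ifP => _ <-;
      exact: le_trans (iter_ge _ c0).
  by apply: le_trans (wc j jS) _; exact: iter_ge.
have [i hi] := hcond s0 snz.
rewrite DsE in hi.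
have iS : i \in S.
  apply/negPn/negP => iS.
  move: hi; rewrite /s (negbTE iS) ltNge => /negP; apply.
  apply: Gam_nn => j'; rewrite /wS; case: ifP => // _; exact: w0.
have Kc0 := Knn c0.
have wiB : w i <= beta (K c) + K c.
  have wi := wm i iS; rewrite /muv in wi.
  case: (boolP (i \in Isum)) => iI.
  - rewrite iI in wi.
    have si : s i = d (w i) by rewrite /s iS iI.
    have [di0 dE] := hd (w0 i).
    have hsp := Gam_split_sum w0 c0 wc iI.
    have h1 : w i < s i + K c.
      apply: le_lt_trans wi _.
      apply: (@le_lt_trans _ _ (Gam Isum gam wS i + G c + c)).
        by rewrite lerD2r; exact: hsp.
      by rewrite /K addrA ltrD2r ltrD2r.
    rewrite si -{1}dE in h1.
    have h2 : alpha (d (w i)) < K c by move: h1; rewrite ltrD2l.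
    have h3 : d (w i) <= beta (K c).
      rewrite -(hba di0); apply/ltW.
      case: hb => [[_ [_ bm]] _]; apply: bm => //.
      exact: ann.
    by rewrite -dE lerD // ltW.
  - rewrite (negbTE iI) in wi.
    have si : s i = w i by rewrite /s iS (negbTE iI).
    have hsp := Gam_split_max w0 c0 wc iI.
    rewrite si -/wS in hi.
    apply: le_trans (_ : w i <= K c) _; last by rewrite lerDr bnn.
    move: wi; rewrite le_max => /orP[h|h]; last by apply: le_trans h _; rewrite /K lerDr Gnn.
    move: (le_trans h hsp); rewrite le_max => /orP[h'|h'].
      by move: (lt_le_trans hi h'); rewrite ltxx.
    by rewrite /K; apply: le_trans h' _; rewrite lerDl.
rewrite iterSr; apply: (IH (S :\ i)) => //.
- by move: hS; rewrite (cardsD1 i S) iS.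
- move=> j' jS'; case: (eqVneq j' i) => [->|ji].
    by apply: le_trans wiB _; rewrite /H lerDr.
  have jS : j' \notin S by move: jS'; rewrite !inE ji.
  by apply: le_trans (wc j' jS) (H_ge c0).
- move=> j' jS'; have jS : j' \in S by move: jS'; rewrite !inE => /andP[].
  apply: le_trans (wm j' jS) _; rewrite /muv; case: ifP => _.
    by rewrite lerD2l H_ge.
  by rewrite le_max2 ?lexx ?H_ge.
Qed.

End Core.
Lemma ctsP_ext (f g : R -> R) : (forall x, f x = g x) -> ctsP f -> ctsP g.
Proof. by move=> e cf x x0 eps e0; have [dd d0 h] := cf x x0 eps e0; exists dd => // y y0; rewrite -!e; exact: h. Qed.
End S.

Theorem lemma2 (R : realType) (n : nat) (Hn : (0 < n)%N)
  (Isum : pred 'I_n) (gam : 'I_n -> 'I_n -> R -> R)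
  (N : ('I_n -> R) -> R) :
  is_norm N ->
  (forall i j, classKinf (gam i j) \/ zero_on_Rplus (gam i j)) ->
  (forall i, zero_on_Rplus (gam i i)) ->
  (exists alpha : R -> R, classKinf alpha /\
     forall s : 'I_n -> R, vnonneg s -> s <> @vzero R n ->
       exists i, Gam Isum gam (Dal Isum alpha s) i < s i) ->
  exists phi : R -> R, classKinf phi /\
    forall w v : 'I_n -> R, vnonneg w -> vnonneg v ->
      (forall i, w i <= muv Isum (Gam Isum gam w) v i) ->
      N w <= phi (N v).
Proof.
move=> hN hg _ [alpha [ha hcond]].
have [beta [hb hba _]] := Kinf_inv ha.
have [d hd] : {d : R -> R & forall y, 0 <= y -> 0 <= d y /\ d y + alpha (d y) = y}.
  apply: (@choice R R (fun y x => 0 <= y -> 0 <= x /\ x + alpha x = y)) => y; case: (ltP y 0) => y0.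
    by exists 0.
  have aa := ha; case: aa => [[a0 [ac am]] _].
  have cD : ctsP (fun x => x + alpha x) by apply: ctsP_add; [exact: ctsP_id|exact/ctsPE].
  have f0' : (fun x => x + alpha x) 0 = 0 by rewrite /= a0 addr0.
  have yle : y <= (fun x => x + alpha x) y by rewrite /= lerDl (ann ha).
  have [x [x0 _ xe]] := surj_cts f0' cD y0 y0 yle.
  by exists x.
have [C [C0 HC]] := Nlower hN.
set KN := \sum_j N (@ev R n j).
have KN0 : 0 <= KN by apply: sumr_ge0 => j _; exact: Nge0.
pose Hf := H gam beta.
pose F := iter n Hf.
have bm := smono_le (hb.1.2.2).
have Hnn c : 0 <= c -> 0 <= Hf c by move=> c0; apply: le_trans (H_ge hg hb c0).
have Fnn k c : 0 <= c -> 0 <= iter k Hf c by move=> c0; apply: le_trans (iter_ge hg hb k c0).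
have Hmono x y : 0 <= x -> x <= y -> Hf x <= Hf y.
  move=> x0 xy; rewrite /Hf /H; apply: lerD => //.
  have Kxy : K gam x <= K gam y by rewrite /K lerD // (Gmono hg).
  apply: lerD => //; rewrite bm //; first exact: Knn.
  by apply: le_trans Kxy; exact: Knn.
have Fmono k x y : 0 <= x -> x <= y -> iter k Hf x <= iter k Hf y.
  move=> x0 xy; elim: k => [|k IH] //=.
  by apply: Hmono => //; exact: Fnn.
have H0 : Hf 0 = 0.
  by rewrite /Hf /H /K (G0 hg) !addr0 add0r hb.1.1.
have F0 k : iter k Hf 0 = 0 by elim: k => [|k IH] //=; rewrite IH H0.
have Hc : ctsP Hf.
  have Kc : ctsP (K gam) by apply: ctsP_add; [exact: Gcts|exact: ctsP_id].
  apply: ctsP_add; first exact: ctsP_id.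
  apply: ctsP_add; last exact: Kc.
  apply: ctsP_comp; [exact/ctsPE/(hb.1.2.1) | exact: Kc | by move=> x x0; apply: (Knn hg)].
have Fc k : ctsP (iter k Hf).
  elim: k => [|k IH]; first exact: ctsP_id.
  apply: (@ctsP_ext _ (fun x => Hf (iter k Hf x))) => //.
  by apply: ctsP_comp => // x x0; exact: Fnn.
pose phi r := KN * F (C * r) + r.
exists phi; split.
  split; [split; [| split] |].
  - by rewrite /phi mulr0 /F F0 mulr0 addr0.
  - apply/ctsPE; apply: ctsP_add; last exact: ctsP_id.
    apply: ctsP_scale; apply: ctsP_comp; first exact: Fc.
      by apply: ctsP_scale; exact: ctsP_id.
    by move=> x x0; rewrite mulr_ge0.
  - move=> x y x0 xy; rewrite /phi; apply: ler_ltD => //.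
    apply: ler_wpM2l => //; apply: Fmono; first by rewrite mulr_ge0.
    by rewrite ler_wpM2l // ltW.
  - move=> M; exists (Num.max M 0); split; first by rewrite le_max lexx orbT.
    rewrite /phi; apply: le_trans (_ : Num.max M 0 <= _); first by rewrite le_max lexx.
    by rewrite lerDr mulr_ge0 // Fnn // mulr_ge0 // le_max lexx orbT.
move=> w v w0 v0 hw.
set c := \big[Num.max/0]_j v j.
have c0 : 0 <= c by exact: bigmax_ge_id.
have vc j : v j <= c by exact: le_bigmax.
have wF : forall j, w j <= F c.
  apply: (core hg ha hb hba hd hcond (k := n) (S := [set: 'I_n])) => //.
  - by rewrite cardsT card_ord.
  - by move=> j; rewrite finset.in_setT.
  - move=> j _; apply: le_trans (hw j) _; rewrite /muv; case: ifP => _.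
      by rewrite lerD2l.
    by rewrite le_max2 ?lexx.
have cN : c <= C * N v.
  apply: bigmax_le; first by rewrite mulr_ge0 // Nge0.
  by move=> j _; rewrite -[v j]ger0_norm //; exact: HC.
apply: le_trans (Nupper hN w) _.
apply: (@le_trans _ _ (F c * KN)).
  rewrite /KN mulr_sumr; apply: ler_sum => j _.
  by rewrite ger0_norm // ler_wpM2r // Nge0.
rewrite /phi mulrC; apply: le_trans (_ : KN * F (C * N v) <= _); last by rewrite lerDl Nge0.
by rewrite ler_wpM2l // Fmono.
Qed.
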